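(* Let $m\in\mathbb{N}_+$. There exist strictly monotonic sequences $(t_i)$ and $(\tau_i)$ of natural numbers and uncountably many $m$-tuples $\alpha=(\alpha_1,\dots,\alpha_m)\in(0,1)^m$ such that, for the action $\mathbb{Z}^m\curvearrowright_\alpha\mathbb{T}^1$, the family of levels $(t_i\mathbb{T}^1,d_{\mathbb{Z}^m})_i$ of the warped cone is quasi-isometric to the family of tori $(\mathbb{T}^{m+1},\tau_i d)_i$.
   Context: $\mathbb{T}^1=\mathbb{R}/\mathbb{Z}$ with standard metric $d$ of circumference $1$, $\mathbb{T}^{m+1}$ with its standard flat metric $d$. The action $\mathbb{Z}^m\curvearrowright_\alpha\mathbb{T}^1$ is $(n_1,\dots,n_m).z=z+\sum_i n_i\alpha_i$, and $\mathbb{Z}^m$ has generating set $\{\pm e_1,\dots,\pm e_m\}$. For $t>0$, $d_{\mathbb{Z}^m}$ is the largest metric on $\mathbb{T}^1$ with $d_{\mathbb{Z}^m}(z,z')\le td(z,z')$ and $d_{\mathbb{Z}^m}(z,z\pm\alpha_j)\le1$ for all $j$. Two sequences of metric spaces $(X_i),(Y_i)$ are quasi-isometric if there are $C\ge1,A\ge0$ and maps $f_i:X_i\to Y_i$ with $C^{-1}d(x,x')-A\le d(f_i(x),f_i(x'))\le Cd(x,x')+A$ and the $A$-neighbourhood of $f_i(X_i)$ equal to $Y_i$. *)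

(* Defs.v *)
From Stdlib Require Import Reals Lra.
From Coquelicot Require Import Coquelicot.
Open Scope R_scope.

(* The circle T^1 = R/Z, represented by the representatives in [0,1). *)
Definition T1 (x : R) : Prop := 0 <= x < 1.

Definition mod1 (x : R) : R := frac_part x.

Definition d1 (x y : R) : R := Rmin (Rabs (x - y)) (1 - Rabs (x - y)).

Definition is_metric_on {X : Type} (S : X -> Prop) (rho : X -> X -> R) : Prop :=
  (forall x y, S x -> S y -> 0 <= rho x y) /\
  (forall x y, S x -> S y -> (rho x y = 0 <-> x = y)) /\
  (forall x y, S x -> S y -> rho x y = rho y x) /\
  (forall x y z, S x -> S y -> S z -> rho x z <= rho x y + rho y z).

(* Admissible metrics for the warped metric at level t of Z^m acting on T^1
   by rotations alpha_0, ..., alpha_{m-1}, generators +-e_j. *)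
Definition warped_admissible (m : nat) (alpha : nat -> R) (t : R)
  (rho : R -> R -> R) : Prop :=
  is_metric_on T1 rho /\
  (forall z z', T1 z -> T1 z' -> rho z z' <= t * d1 z z') /\
  (forall z j, T1 z -> (j < m)%nat ->
     rho z (mod1 (z + alpha j)) <= 1 /\ rho z (mod1 (z - alpha j)) <= 1).

(* d_{Z^m}: the largest such metric, i.e. the pointwise supremum of the
   admissible metrics. *)
Definition warped_dist (m : nat) (alpha : nat -> R) (t : R) (z z' : R) : R :=
  real (Lub_Rbar (fun r => exists rho,
          warped_admissible m alpha t rho /\ r = rho z z')).

(* The torus T^{m+1}: points x : nat -> R with x k in [0,1) for k <= m,
   and x k = 0 for k > m. *)
Definition Torus (m : nat) (x : nat -> R) : Prop :=
  (forall k, (k <= m)%nat -> T1 (x k)) /\ (forall k, (m < k)%nat -> x k = 0).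

Definition torus_dist (m : nat) (x y : nat -> R) : R :=
  sqrt (sum_f_R0 (fun k => (d1 (x k) (y k)) ^ 2) m).

Definition QI_seq {X Y : Type}
  (SX : nat -> X -> Prop) (dX : nat -> X -> X -> R)
  (SY : nat -> Y -> Prop) (dY : nat -> Y -> Y -> R) : Prop :=
  exists (C A : R), 1 <= C /\ 0 <= A /\
  exists f : nat -> X -> Y, forall i,
    (forall x, SX i x -> SY i (f i x)) /\
    (forall x x', SX i x -> SX i x' ->
       dX i x x' / C - A <= dY i (f i x) (f i x') /\
       dY i (f i x) (f i x') <= C * dX i x x' + A) /\
    (forall y, SY i y -> exists x, SX i x /\ dY i (f i x) y <= A).

Definition strictly_increasing (u : nat -> nat) : Prop :=
  forall i j, (i < j)%nat -> (u i < u j)%nat.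

Definition uncountable (S : (nat -> R) -> Prop) : Prop :=
  ~ exists g : nat -> (nat -> R), forall a, S a -> exists n, g n = a.

(* m-tuples in (0,1)^m, encoded as sequences vanishing from index m on. *)
Definition tuple_in_01 (m : nat) (alpha : nat -> R) : Prop :=
  (forall j, (j < m)%nat -> 0 < alpha j < 1) /\
  (forall j, (m <= j)%nat -> alpha j = 0).

(* Main.v *)
From Pilot Require Import Defs.
From Stdlib Require Import Reals Lra Lia ZArith.
From Stdlib Require Import ClassicalEpsilon.
From Coquelicot Require Import Coquelicot.
Import Pilot.Defs.
Open Scope R_scope.

Definition isZ (x : R) : Prop := exists n : Z, x = IZR n.

Lemma isZ_IZR n : isZ (IZR n). Proof. exists n; reflexivity. Qed.
Lemma isZ_0 : isZ 0. Proof. exists 0%Z; reflexivity. Qed.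
Lemma isZ_1 : isZ 1. Proof. exists 1%Z; reflexivity. Qed.
Lemma isZ_plus x y : isZ x -> isZ y -> isZ (x + y).
Proof. intros [a ->] [b ->]; exists (a+b)%Z; now rewrite plus_IZR. Qed.
Lemma isZ_opp x : isZ x -> isZ (- x).
Proof. intros [a ->]; exists (-a)%Z; now rewrite opp_IZR. Qed.
Lemma isZ_minus x y : isZ x -> isZ y -> isZ (x - y).
Proof. intros; unfold Rminus; apply isZ_plus; auto; apply isZ_opp; auto. Qed.
Lemma isZ_mult x y : isZ x -> isZ y -> isZ (x * y).
Proof. intros [a ->] [b ->]; exists (a*b)%Z; now rewrite mult_IZR. Qed.
Lemma isZ_pow x n : isZ x -> isZ (x ^ n).
Proof. intros H; induction n; simpl; [apply isZ_1| apply isZ_mult; auto]. Qed.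
Lemma isZ_INR n : isZ (INR n).
Proof. exists (Z.of_nat n); apply INR_IZR_INZ. Qed.
Lemma isZ_Int x : isZ (IZR (Int_part x)). Proof. apply isZ_IZR. Qed.

Lemma isZ_unique a b : isZ a -> isZ b -> Rabs (a - b) < 1 -> a = b.
Proof.
  intros [x ->] [y ->] H. rewrite <- minus_IZR in H.
  apply Rabs_def2 in H. destruct H as [H1 H2].
  assert (H3 : IZR (-1) < IZR (x - y)) by lra.
  apply lt_IZR in H1; apply lt_IZR in H3. f_equal; lia.
Qed.

Lemma isZ_cases x : isZ x -> x = 0 \/ 1 <= x \/ x <= -1.
Proof.
  intros [z ->]. destruct (Z.lt_trichotomy z 0) as [H|[H|H]].
  - right; right. assert (z <= -1)%Z by lia. apply IZR_le in H0. lra.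
  - left; subst; reflexivity.
  - right; left. assert (1 <= z)%Z by lia. apply IZR_le in H0. lra.
Qed.

Lemma isZ_nat x : isZ x -> exists n : nat, x = INR n \/ x = - INR n.
Proof.
  intros [z ->]. exists (Z.abs_nat z).
  destruct (Z.le_gt_cases 0 z).
  - left. rewrite INR_IZR_INZ. f_equal. lia.
  - right. rewrite INR_IZR_INZ. rewrite <- opp_IZR. f_equal. lia.
Qed.

Lemma frac_charac x k : isZ k -> k <= x < k + 1 -> frac_part x = x - k.
Proof.
  intros Hk Hx. unfold frac_part. f_equal.
  destruct (base_Int_part x) as [H1 H2].
  apply isZ_unique; [apply isZ_Int | exact Hk | ].
  apply Rabs_def1; lra.
Qed.

Lemma frac_bounds x : 0 <= frac_part x < 1.
Proof. destruct (base_fp x); lra. Qed.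

Lemma x_minus_frac x : isZ (x - frac_part x).
Proof. unfold frac_part. replace (x - (x - IZR (Int_part x))) with (IZR (Int_part x)) by ring. apply isZ_Int. Qed.

Lemma frac_int_shift x n : isZ n -> frac_part (x + n) = frac_part x.
Proof.
  intros Hn. rewrite (frac_charac (x+n) (IZR (Int_part x) + n)).
  - unfold frac_part; ring.
  - apply isZ_plus; auto; apply isZ_Int.
  - destruct (base_Int_part x); lra.
Qed.

Lemma frac_frac_plus a b : frac_part (frac_part a + b) = frac_part (a + b).
Proof.
  replace (frac_part a + b) with ((a + b) + - (a - frac_part a)) by ring.
  apply frac_int_shift. apply isZ_opp, x_minus_frac.
Qed.

Lemma frac_id x : 0 <= x < 1 -> frac_part x = x.
Proof. intros H. rewrite (frac_charac x 0); [ring | apply isZ_0 | lra]. Qed.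

Lemma d1_UB a b n : isZ n -> d1 (frac_part a) (frac_part b) <= Rabs (a - b - n).
Proof.
  intros Hn. unfold d1.
  set (w := frac_part a - frac_part b).
  set (M := n - (a - frac_part a) + (b - frac_part b)).
  assert (HM : isZ M).
  { unfold M. apply isZ_plus; [apply isZ_minus|]; auto; apply x_minus_frac. }
  replace (a - b - n) with (w - M) by (unfold w, M; ring).
  pose proof (frac_bounds a); pose proof (frac_bounds b).
  assert (Hw : -1 < w < 1) by (unfold w; lra).
  destruct (isZ_cases M HM) as [HH|[HH|HH]].
  - rewrite HH, Rminus_0_r. apply Rmin_l.
  - eapply Rle_trans; [apply Rmin_r|]. unfold Rabs at 1 2; repeat destruct Rcase_abs; lra.
  - eapply Rle_trans; [apply Rmin_r|]. unfold Rabs at 1 2; repeat destruct Rcase_abs; lra.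
Qed.

Lemma d1_attain a b : exists n, isZ n /\ d1 (frac_part a) (frac_part b) = Rabs (a - b - n).
Proof.
  unfold d1.
  set (w := frac_part a - frac_part b).
  set (N0 := (a - frac_part a) - (b - frac_part b)).
  assert (HN : isZ N0) by (unfold N0; apply isZ_minus; apply x_minus_frac).
  assert (Hab : a - b = w + N0) by (unfold w, N0; ring).
  pose proof (frac_bounds a); pose proof (frac_bounds b).
  assert (Hw : -1 < w < 1) by (unfold w; lra).
  destruct (Rle_dec (Rabs w) (1 - Rabs w)) as [Hl|Hl].
  - exists N0. split; auto. rewrite Rmin_left by auto. f_equal. lra.
  - rewrite Rmin_right by lra.
    destruct (Rle_dec 0 w).
    + exists (N0 + 1). split; [apply isZ_plus; auto; apply isZ_1|].
      rewrite Hab. replace (w + N0 - (N0 + 1)) with (w - 1) by ring.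
      unfold Rabs; repeat destruct Rcase_abs; lra.
    + exists (N0 - 1). split; [apply isZ_minus; auto; apply isZ_1|].
      rewrite Hab. replace (w + N0 - (N0 - 1)) with (w + 1) by ring.
      unfold Rabs; repeat destruct Rcase_abs; lra.
Qed.

Lemma d1_sym x y : d1 x y = d1 y x.
Proof. unfold d1. now rewrite Rabs_minus_sym. Qed.

Lemma d1_half x y : d1 x y <= 1/2.
Proof. unfold d1. destruct (Rle_dec (Rabs (x-y)) (1 - Rabs (x-y))).
  - rewrite Rmin_left; lra.
  - rewrite Rmin_right; lra. Qed.

Lemma d1_nonneg x y : T1 x -> T1 y -> 0 <= d1 x y.
Proof. unfold T1, d1; intros. apply Rmin_glb; unfold Rabs; destruct Rcase_abs; lra. Qed.

Lemma d1_nonneg_frac a b : 0 <= d1 (frac_part a) (frac_part b).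
Proof. apply d1_nonneg; apply frac_bounds. Qed.

Lemma d1_xx x : d1 x x = 0.
Proof. unfold d1. rewrite Rminus_diag, Rabs_R0. apply Rmin_left; lra. Qed.

Lemma d1_zero x y : T1 x -> T1 y -> d1 x y = 0 -> x = y.
Proof.
  unfold T1, d1; intros Hx Hy H.
  destruct (Rle_dec (Rabs (x-y)) (1 - Rabs (x-y))).
  - rewrite Rmin_left in H by auto. unfold Rabs in H; destruct Rcase_abs; lra.
  - rewrite Rmin_right in H by lra. unfold Rabs in H; destruct Rcase_abs; lra.
Qed.

Lemma T1_frac x : T1 (frac_part x). Proof. apply frac_bounds. Qed.

Lemma d1_UB' x y n : T1 x -> T1 y -> isZ n -> d1 x y <= Rabs (x - y - n).
Proof. intros Hx Hy Hn. replace (d1 x y) with (d1 (frac_part x) (frac_part y)) by (now rewrite !frac_id). apply d1_UB; auto. Qed.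

Lemma d1_attain' x y : T1 x -> T1 y -> exists n, isZ n /\ d1 x y = Rabs (x - y - n).
Proof. intros Hx Hy. replace (d1 x y) with (d1 (frac_part x) (frac_part y)) by (now rewrite !frac_id).
  destruct (d1_attain x y) as [n [Hn E]]. exists n; split; auto. Qed.

Lemma d1_tri x y z : T1 x -> T1 y -> T1 z -> d1 x z <= d1 x y + d1 y z.
Proof.
  intros Hx Hy Hz.
  destruct (d1_attain' x y Hx Hy) as [n1 [H1 E1]].
  destruct (d1_attain' y z Hy Hz) as [n2 [H2 E2]].
  rewrite E1, E2. eapply Rle_trans.
  - apply (d1_UB' x z (n1 + n2)); auto. apply isZ_plus; auto.
  - replace (x - z - (n1 + n2)) with ((x - y - n1) + (y - z - n2)) by ring.
    apply Rabs_triang.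
Qed.

Fixpoint sumN (f : nat -> R) (n : nat) : R :=
  match n with O => 0 | S n => sumN f n + f n end.

Lemma sumN_ext f g n : (forall k, (k < n)%nat -> f k = g k) -> sumN f n = sumN g n.
Proof. induction n; simpl; intros H; auto. rewrite IHn by (intros; apply H; lia). rewrite H by lia; auto. Qed.

Lemma sumN_le f g n : (forall k, (k < n)%nat -> f k <= g k) -> sumN f n <= sumN g n.
Proof. induction n; simpl; intros H; [lra|]. assert (f n <= g n) by (apply H; lia).
  assert (sumN f n <= sumN g n) by (apply IHn; intros; apply H; lia). lra. Qed.

Lemma sumN_plus f g n : sumN (fun k => f k + g k) n = sumN f n + sumN g n.
Proof. induction n; simpl; [ring|]. rewrite IHn; ring. Qed.

Lemma sumN_scal c f n : sumN (fun k => c * f k) n = c * sumN f n.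
Proof. induction n; simpl; [ring|]. rewrite IHn; ring. Qed.

Lemma sumN_const c n : sumN (fun _ => c) n = INR n * c.
Proof. induction n; simpl sumN; [simpl; ring|]. rewrite IHn, S_INR; ring. Qed.

Lemma sumN_nonneg f n : (forall k, (k < n)%nat -> 0 <= f k) -> 0 <= sumN f n.
Proof. intros H. replace 0 with (sumN (fun _ => 0) n). apply sumN_le; auto.
  rewrite sumN_const; ring. Qed.

Lemma sumN_term f n k : (forall k, (k < n)%nat -> 0 <= f k) -> (k < n)%nat -> f k <= sumN f n.
Proof.
  induction n; intros H Hk; [lia|]. simpl.
  destruct (Nat.eq_dec k n).
  - subst. assert (0 <= sumN f n) by (apply sumN_nonneg; intros; apply H; lia). lra.
  - assert (f k <= sumN f n) by (apply IHn; [intros; apply H; lia| lia]).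
    assert (0 <= f n) by (apply H; lia). lra.
Qed.

Lemma sum_f_R0_sumN f m : sum_f_R0 f m = sumN f (S m).
Proof. induction m; simpl; [ring|]. simpl in IHm. rewrite IHm. ring. Qed.

Lemma sumN_abs f n : Rabs (sumN f n) <= sumN (fun k => Rabs (f k)) n.
Proof. induction n; simpl; [rewrite Rabs_R0; lra|].
  eapply Rle_trans; [apply Rabs_triang|]. lra. Qed.

Lemma sumN_split_last f n : sumN f (S n) = sumN f n + f n.
Proof. reflexivity. Qed.

Lemma sumsq_le_sq a n : (forall k, (k < n)%nat -> 0 <= a k) ->
  sumN (fun k => a k ^ 2) n <= (sumN a n) ^ 2.
Proof.
  induction n; intros H; simpl; [lra|].
  assert (IH := IHn (fun k Hk => H k ltac:(lia))).
  assert (0 <= sumN a n) by (apply sumN_nonneg; intros; apply H; lia).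
  assert (0 <= a n) by (apply H; lia). simpl in IH. nra.
Qed.

Lemma sqrt_sumsq_le a n : (forall k, (k < n)%nat -> 0 <= a k) ->
  sqrt (sumN (fun k => a k ^ 2) n) <= sumN a n.
Proof.
  intros H. rewrite <- (sqrt_pow2 (sumN a n)) by (apply sumN_nonneg; auto).
  apply sqrt_le_1_alt. apply sumsq_le_sq; auto.
Qed.

Lemma term_le_sqrt a n k : (forall k, (k < n)%nat -> 0 <= a k) -> (k < n)%nat ->
  a k <= sqrt (sumN (fun k => a k ^ 2) n).
Proof.
  intros H Hk. rewrite <- (sqrt_pow2 (a k)) by auto.
  apply sqrt_le_1_alt. apply (sumN_term (fun k => a k ^ 2)); auto.
  intros; apply pow_le; auto.
Qed.

Lemma sumN_le_sqrt a n : (forall k, (k < n)%nat -> 0 <= a k) ->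
  sumN a n <= INR n * sqrt (sumN (fun k => a k ^ 2) n).
Proof.
  intros H. rewrite <- sumN_const. apply sumN_le. intros; apply term_le_sqrt; auto.
Qed.

Lemma lub_props (E : R -> Prop) (M r0 : R) : E r0 -> (forall r, E r -> r <= M) ->
  (forall r, E r -> r <= real (Lub_Rbar E)) /\ real (Lub_Rbar E) <= M.
Proof.
  intros H0 HM. destruct (Lub_Rbar_correct E) as [Hub Hlub].
  assert (HMb : Rbar_le (Lub_Rbar E) (Finite M)).
  { apply Hlub. intros x Hx. simpl. apply HM; auto. }
  assert (H1 := Hub r0 H0).
  destruct (Lub_Rbar E) as [l| |]; simpl in *; try contradiction.
  all: try (split; [intros r Hr; apply (Hub r Hr) | auto]).
Qed.

Lemma div_le_helper a b c d : 0 < b -> 0 < d -> a * d <= c * b -> a / b <= c / d.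
Proof.
  intros Hb Hd H. replace (a / b) with ((a * d) * / (b * d)) by (field; lra).
  replace (c / d) with ((c * b) * / (b * d)) by (field; lra).
  apply Rmult_le_compat_r; auto. apply Rlt_le, Rinv_0_lt_compat, Rmult_lt_0_compat; auto.
Qed.

Lemma sumN_lin3 a b c f g h n :
  sumN (fun j => a * f j + b * g j + c * h j) n = a * sumN f n + b * sumN g n + c * sumN h n.
Proof. induction n; simpl; [ring|]. rewrite IHn; ring. Qed.

Lemma isZ_sumN f n : (forall k, (k < n)%nat -> isZ (f k)) -> isZ (sumN f n).
Proof. induction n; intros H; simpl; [apply isZ_0|]. apply isZ_plus; [apply IHn; intros; apply H; lia| apply H; lia]. Qed.

Section Adm.
Variables (m : nat) (al : nat -> R) (t : R) (rho : R -> R -> R).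
Hypothesis Hadm : warped_admissible m al t rho.
Hypothesis Ht : 0 <= t.

Lemma adm_tri x y z : T1 x -> T1 y -> T1 z -> rho x z <= rho x y + rho y z.
Proof. destruct Hadm as [[_ [_ [_ H]]] _]. auto. Qed.

Lemma adm_refl x : T1 x -> rho x x = 0.
Proof. destruct Hadm as [[_ [H _]] _]. intros; apply H; auto. Qed.

Lemma adm_step a j : (j < m)%nat ->
  rho (frac_part a) (frac_part (a + al j)) <= 1 /\ rho (frac_part a) (frac_part (a - al j)) <= 1.
Proof.
  intros Hj. destruct Hadm as [_ [_ H]].
  destruct (H (frac_part a) j (T1_frac a) Hj) as [H1 H2]. unfold mod1 in *.
  rewrite frac_frac_plus in H1. unfold Rminus in H2 |- *. rewrite frac_frac_plus in H2. auto.
Qed.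

Lemma adm_nat a j N : (j < m)%nat ->
  rho (frac_part a) (frac_part (a + INR N * al j)) <= INR N /\
  rho (frac_part a) (frac_part (a - INR N * al j)) <= INR N.
Proof.
  intros Hj. induction N.
  - simpl. replace (a + 0 * al j) with a by ring. replace (a - 0 * al j) with a by ring.
    rewrite adm_refl by apply T1_frac. lra.
  - destruct IHN as [H1 H2]. rewrite S_INR. split.
    + eapply Rle_trans; [apply (adm_tri _ (frac_part (a + INR N * al j))); apply T1_frac|].
      destruct (adm_step (a + INR N * al j) j Hj) as [H3 _].
      replace (a + INR N * al j + al j) with (a + (INR N + 1) * al j) in H3 by ring. lra.
    + eapply Rle_trans; [apply (adm_tri _ (frac_part (a - INR N * al j))); apply T1_frac|].
      destruct (adm_step (a - INR N * al j) j Hj) as [_ H3].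
      replace (a - INR N * al j - al j) with (a - (INR N + 1) * al j) in H3 by ring. lra.
Qed.

Lemma adm_int a j g : (j < m)%nat -> isZ g ->
  rho (frac_part a) (frac_part (a + g * al j)) <= Rabs g.
Proof.
  intros Hj Hg. destruct (isZ_nat g Hg) as [N [-> | ->]].
  - rewrite Rabs_right by (apply Rle_ge, pos_INR). apply adm_nat; auto.
  - rewrite Rabs_Ropp, Rabs_right by (apply Rle_ge, pos_INR).
    replace (a + - INR N * al j) with (a - INR N * al j) by ring. apply adm_nat; auto.
Qed.

Lemma adm_multi a (g : nat -> R) J : (J <= m)%nat -> (forall j, isZ (g j)) ->
  rho (frac_part a) (frac_part (a + sumN (fun j => g j * al j) J)) <= sumN (fun j => Rabs (g j)) J.
Proof.
  intros HJ Hg. induction J.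
  - simpl. rewrite Rplus_0_r, adm_refl by apply T1_frac. lra.
  - simpl sumN. assert (IH := IHJ ltac:(lia)).
    eapply Rle_trans; [apply (adm_tri _ (frac_part (a + sumN (fun j => g j * al j) J))); apply T1_frac|].
    assert (H := adm_int (a + sumN (fun j => g j * al j) J) J (g J) ltac:(lia) (Hg J)).
    rewrite Rplus_assoc in H. lra.
Qed.

Lemma adm_bound z z' (g : nat -> R) K : T1 z -> T1 z' -> (forall j, isZ (g j)) -> isZ K ->
  rho z z' <= sumN (fun j => Rabs (g j)) m + t * Rabs (z + sumN (fun j => g j * al j) m - z' - K).
Proof.
  intros Hz Hz' Hg HK.
  set (S := sumN (fun j => g j * al j) m).
  eapply Rle_trans; [apply (adm_tri _ (frac_part (z + S))); auto; apply T1_frac|].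
  assert (H1 := adm_multi z g m (le_n m) Hg). rewrite (frac_id z Hz) in H1. fold S in H1.
  destruct Hadm as [_ [H2 _]].
  assert (H3 := H2 (frac_part (z + S)) z' (T1_frac _) Hz').
  assert (H4 : d1 (frac_part (z + S)) z' <= Rabs (z + S - z' - K)).
  { rewrite <- (frac_id z' Hz') at 1. apply d1_UB; auto. }
  assert (t * d1 (frac_part (z + S)) z' <= t * Rabs (z + S - z' - K)) by (apply Rmult_le_compat_l; auto).
  lra.
Qed.

End Adm.

Lemma pow_ge1 (Q : R) n : 1 <= Q -> 1 <= Q ^ n.
Proof. intros H; induction n; simpl; nra. Qed.

Lemma pow_ge_base (Q : R) n : 1 <= Q -> (1 <= n)%nat -> Q <= Q ^ n.
Proof. intros H Hn. destruct n; [lia|]. simpl. assert (1 <= Q^n) by (apply pow_ge1; auto). nra. Qed.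

Lemma pow_split (Q : R) a b : Q ^ (a + b) = Q ^ a * Q ^ b.
Proof. apply pow_add. Qed.

Section Level.
Variables (m : nat) (Q u bx by_ : R) (al Nn eps : nat -> R).
Hypothesis Hm : (0 < m)%nat.
Hypothesis HQ : 2 <= Q.
Hypothesis HQZ : isZ Q.
Hypothesis HuZ : isZ u.
Hypothesis HbxZ : isZ bx.
Hypothesis HbyZ : isZ by_.
Hypothesis Hbez : bx * u + by_ * Q ^ m = 1.
Hypothesis Hal : forall j, (j < m)%nat -> al j = u / Q ^ (j+1) + Nn j + eps j.
Hypothesis HNn : forall j, (j < m)%nat -> isZ (Nn j).
Hypothesis Heps : forall j, (j < m)%nat -> 0 <= eps j <= 2 / Q ^ (m+2).

Let D := Q ^ m.
Let t := Q ^ (m+1).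

Lemma Qpow_pos n : 0 < Q ^ n.
Proof. apply pow_lt; lra. Qed.
Lemma Qpow_ge1 n : 1 <= Q ^ n.
Proof. apply pow_ge1; lra. Qed.
Lemma D_pos : 0 < D. Proof. apply Qpow_pos. Qed.
Lemma D_isZ : isZ D. Proof. apply isZ_pow; auto. Qed.
Lemma t_eq : t = Q * D. Proof. unfold t, D. rewrite Nat.add_comm. simpl. ring. Qed.

Definition Ik k := IZR (Int_part (- bx * Q ^ k / D)).
Definition w k := if (k <? m)%nat then D * frac_part (- bx * Q ^ k / D) else D.

Lemma w_lt k : (k < m)%nat -> w k = - bx * Q ^ k - D * Ik k.
Proof.
  intros Hk. unfold w. rewrite (proj2 (Nat.ltb_lt k m) Hk). unfold frac_part, Ik.
  pose proof D_pos. field. lra.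
Qed.

Lemma w_m : w m = D.
Proof. unfold w. rewrite Nat.ltb_irrefl. auto. Qed.

Lemma w_bounds k : (k <= m)%nat -> 0 <= w k <= D /\ isZ (w k).
Proof.
  intros Hk. pose proof D_pos. destruct (Nat.eq_dec k m).
  - subst. rewrite w_m. split; [lra|apply D_isZ].
  - split.
    + unfold w. rewrite (proj2 (Nat.ltb_lt k m)) by lia.
      pose proof (frac_bounds (- bx * Q ^ k / D)). nra.
    + rewrite w_lt by lia. apply isZ_minus; [apply isZ_mult; [apply isZ_opp; auto| apply isZ_pow; auto]|].
      apply isZ_mult; [apply D_isZ| apply isZ_Int].
Qed.

Lemma w_u k : (k < m)%nat -> exists X, isZ X /\ u * w k = - Q ^ k + D * X.
Proof.
  intros Hk. exists (by_ * Q ^ k - u * Ik k). split.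
  - apply isZ_minus; apply isZ_mult; auto; try apply isZ_pow; auto; apply isZ_Int.
  - rewrite w_lt by auto. fold D in Hbez.
    replace (u * (- bx * Q ^ k - D * Ik k)) with (- (bx * u) * Q ^ k - D * u * Ik k) by ring.
    replace (bx * u) with (1 - by_ * D) by lra. ring.
Qed.

Lemma w_step k : (k < m)%nat -> isZ ((Q * w k - w (S k)) / D).
Proof.
  intros Hk. pose proof D_pos. rewrite w_lt by auto.
  destruct (Nat.eq_dec (S k) m).
  - rewrite e, w_m.
    replace ((Q * (- bx * Q ^ k - D * Ik k) - D) / D) with (- bx * (Q ^ (S k) / D) - Q * Ik k - 1)
      by (simpl; field; lra).
    rewrite e. unfold D. replace (Q ^ m / Q ^ m) with 1 by (field; pose proof (Qpow_pos m); lra).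
    apply isZ_minus; [apply isZ_minus|apply isZ_1].
    + apply isZ_mult; [apply isZ_opp; auto | apply isZ_1].
    + apply isZ_mult; auto; apply isZ_Int.
  - rewrite (w_lt (S k)) by lia.
    replace ((Q * (- bx * Q ^ k - D * Ik k) - (- bx * Q ^ S k - D * Ik (S k))) / D)
      with (Ik (S k) - Q * Ik k) by (simpl; field; lra).
    apply isZ_minus; [apply isZ_Int| apply isZ_mult; auto; apply isZ_Int].
Qed.

Lemma gen_approx k j : (k <= m)%nat -> (j < m)%nat ->
  exists M, isZ M /\ Rabs (w k * al j - M) <= 2 / Q.
Proof.
  intros Hk Hj. rewrite Hal by auto.
  destruct (w_bounds k Hk) as [[Hw0 HwD] HwZ].
  destruct (Heps j Hj) as [He0 He1].
  assert (HQ2 : Q ^ (m + 2) = D * Q ^ 2) by (unfold D; apply pow_add).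
  assert (Hweps : 0 <= w k * eps j <= 2 / Q ^ 2).
  { split; [apply Rmult_le_pos; auto|].
    rewrite HQ2 in He1. pose proof D_pos. pose proof (Qpow_pos 2).
    apply Rle_trans with (D * (2 / (D * Q^2))).
    - apply Rmult_le_compat; auto.
    - right. field. lra. }
  assert (HQQ : 2 / Q ^ 2 <= 1 / Q).
  { apply div_le_helper; simpl; nra. }
  assert (HQ1 : 1 / Q <= 2 / Q). { apply div_le_helper; nra. }
  assert (Hsplit : Q ^ m = Q ^ (j+1) * Q ^ (m - (j+1))) by (rewrite <- pow_add; f_equal; lia).
  pose proof (Qpow_pos (j+1)).
  destruct (Nat.eq_dec k m).
  - subst k. rewrite w_m.
    exists (u * Q ^ (m - (j+1)) + D * Nn j). split.
    + apply isZ_plus; apply isZ_mult; auto; try apply isZ_pow; auto; apply D_isZ.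
    + replace (D * (u / Q ^ (j + 1) + Nn j + eps j) - (u * Q ^ (m - (j + 1)) + D * Nn j))
        with (D * eps j) by (unfold D; rewrite Hsplit; field; lra).
      rewrite w_m in Hweps. rewrite Rabs_right by lra. lra.
  - destruct (w_u k ltac:(lia)) as [X [HX HuX]].
    assert (E1 : w k * (u / Q ^ (j + 1)) = - (Q ^ k / Q ^ (j+1)) + X * Q ^ (m - (j+1))).
    { replace (w k * (u / Q ^ (j + 1))) with (u * w k / Q ^ (j+1)) by (field; lra).
      rewrite HuX. unfold D. rewrite Hsplit. field. lra. }
    destruct (le_lt_dec (j+1) k).
    + assert (Hk2 : Q ^ k = Q ^ (j+1) * Q ^ (k - (j+1))) by (rewrite <- pow_add; f_equal; lia).
      exists (- Q ^ (k - (j+1)) + X * Q ^ (m - (j+1)) + w k * Nn j). split.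
      * apply isZ_plus; [apply isZ_plus|]; [apply isZ_opp, isZ_pow; auto| apply isZ_mult; auto; apply isZ_pow; auto|].
        apply isZ_mult; auto.
      * replace (w k * (u / Q ^ (j + 1) + Nn j + eps j) - (- Q ^ (k - (j + 1)) + X * Q ^ (m - (j + 1)) + w k * Nn j))
          with (w k * eps j).
        2:{ replace (w k * (u/Q^(j+1) + Nn j + eps j)) with (w k * (u / Q^(j+1)) + w k * Nn j + w k * eps j) by ring.
            rewrite E1, Hk2. field. lra. }
        rewrite Rabs_right by lra. lra.
    + assert (Hk2 : Q ^ (j+1) = Q ^ k * Q ^ (j + 1 - k)) by (rewrite <- pow_add; f_equal; lia).
      assert (Hsmall : 0 <= Q ^ k / Q ^ (j+1) <= 1 / Q).
      { rewrite Hk2. pose proof (Qpow_pos k). pose proof (Qpow_pos (j+1-k)).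
        assert (Q <= Q ^ (j + 1 - k)) by (apply pow_ge_base; lra || lia).
        replace (Q ^ k / (Q ^ k * Q ^ (j + 1 - k))) with (1 / Q ^ (j+1-k)) by (field; lra).
        split. apply Rlt_le, Rdiv_lt_0_compat; lra.
        apply Rmult_le_compat_l; [lra|]. apply Rinv_le_contravar; lra. }
      exists (X * Q ^ (m - (j+1)) + w k * Nn j). split.
      * apply isZ_plus; apply isZ_mult; auto; apply isZ_pow; auto.
      * replace (w k * (u / Q ^ (j + 1) + Nn j + eps j) - (X * Q ^ (m - (j + 1)) + w k * Nn j))
          with (- (Q ^ k / Q ^ (j+1)) + w k * eps j).
        2:{ replace (w k * (u/Q^(j+1) + Nn j + eps j)) with (w k * (u / Q^(j+1)) + w k * Nn j + w k * eps j) by ring.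
            rewrite E1. ring. }
        unfold Rabs; destruct Rcase_abs; lra.
Qed.


Definition F z k := frac_part (w k * z).
Definition cc := / (4 * (INR m + 1)).
Definition rho0 z z' := cc * Q * sumN (fun k => d1 (F z k) (F z' k)) (S m) + d1 z z' / 2.

Lemma cc_pos : 0 < cc.
Proof. unfold cc. apply Rinv_0_lt_compat. pose proof (pos_INR m). lra. Qed.

Lemma F_lip k z z' : (k <= m)%nat -> T1 z -> T1 z' -> d1 (F z k) (F z' k) <= D * d1 z z'.
Proof.
  intros Hk Hz Hz'. destruct (d1_attain' z z' Hz Hz') as [n [Hn E]].
  destruct (w_bounds k Hk) as [[Hw0 HwD] HwZ].
  unfold F. eapply Rle_trans; [apply (d1_UB _ _ (w k * n)); apply isZ_mult; auto|].
  replace (w k * z - w k * z' - w k * n) with (w k * (z - z' - n)) by ring.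
  rewrite Rabs_mult, Rabs_right by lra. rewrite <- E.
  apply Rmult_le_compat_r; auto. apply d1_nonneg; auto.
Qed.

Lemma F_gen k j z : (k <= m)%nat -> (j < m)%nat ->
  d1 (F z k) (F (frac_part (z + al j)) k) <= 2 / Q /\
  d1 (F z k) (F (frac_part (z - al j)) k) <= 2 / Q.
Proof.
  intros Hk Hj. destruct (gen_approx k j Hk Hj) as [M [HM HMb]].
  destruct (w_bounds k Hk) as [_ HwZ]. unfold F. split.
  - set (I := (z + al j) - frac_part (z + al j)).
    assert (HI : isZ I) by apply x_minus_frac.
    eapply Rle_trans; [apply (d1_UB _ _ (w k * I - M)); apply isZ_minus; auto; apply isZ_mult; auto|].
    replace (w k * z - w k * frac_part (z + al j) - (w k * I - M)) with (- (w k * al j - M))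
      by (unfold I; ring).
    rewrite Rabs_Ropp; auto.
  - set (I := (z - al j) - frac_part (z - al j)).
    assert (HI : isZ I) by apply x_minus_frac.
    eapply Rle_trans; [apply (d1_UB _ _ (w k * I + M)); apply isZ_plus; auto; apply isZ_mult; auto|].
    replace (w k * z - w k * frac_part (z - al j) - (w k * I + M)) with (w k * al j - M)
      by (unfold I; ring).
    auto.
Qed.

Lemma sumF_nonneg z z' : 0 <= sumN (fun k => d1 (F z k) (F z' k)) (S m).
Proof. apply sumN_nonneg. intros; apply d1_nonneg_frac. Qed.

Lemma rho0_adm : warped_admissible m al t rho0.
Proof.
  pose proof cc_pos. assert (HQ0 : 0 < Q) by lra. pose proof D_pos.
  assert (Hm1 : 0 < INR m + 1) by (pose proof (pos_INR m); lra).
  split; [|split].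
  - split; [|split; [|split]].
    + intros x y Hx Hy. unfold rho0. pose proof (sumF_nonneg x y). pose proof (d1_nonneg x y Hx Hy).
      assert (0 <= cc * Q * sumN (fun k => d1 (F x k) (F y k)) (S m)) by (apply Rmult_le_pos; nra).
      lra.
    + intros x y Hx Hy. split.
      * intros Hz0. unfold rho0 in Hz0. pose proof (sumF_nonneg x y). pose proof (d1_nonneg x y Hx Hy).
        assert (0 <= cc * Q * sumN (fun k => d1 (F x k) (F y k)) (S m)) by (apply Rmult_le_pos; nra).
        apply d1_zero; auto. lra.
      * intros ->. unfold rho0. rewrite d1_xx.
        rewrite (sumN_ext _ (fun _ => 0)) by (intros; apply d1_xx). rewrite sumN_const. idtac. lra.
    + intros x y Hx Hy. unfold rho0. rewrite d1_sym. f_equal. f_equal.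
      apply sumN_ext. intros; apply d1_sym.
    + intros x y z Hx Hy Hz. unfold rho0.
      assert (sumN (fun k => d1 (F x k) (F z k)) (S m) <=
              sumN (fun k => d1 (F x k) (F y k)) (S m) + sumN (fun k => d1 (F y k) (F z k)) (S m)).
      { rewrite <- sumN_plus. apply sumN_le. intros; apply d1_tri; apply T1_frac. }
      pose proof (d1_tri x y z Hx Hy Hz).
      assert (0 <= cc * Q) by nra. nra.
  - intros z z' Hz Hz'. unfold rho0.
    assert (Hs : sumN (fun k => d1 (F z k) (F z' k)) (S m) <= INR (S m) * (D * d1 z z')).
    { rewrite <- sumN_const. apply sumN_le. intros; apply F_lip; auto; lia. }
    rewrite S_INR in Hs.
    assert (Hs2 : cc * Q * sumN (fun k => d1 (F z k) (F z' k)) (S m) <= cc * Q * ((INR m + 1) * (D * d1 z z'))).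
    { apply Rmult_le_compat_l; nra. }
    replace (cc * Q * ((INR m + 1) * (D * d1 z z'))) with (t / 4 * d1 z z') in Hs2
      by (rewrite t_eq; unfold cc; field; lra).
    pose proof (d1_nonneg z z' Hz Hz').
    assert (1 <= t) by (unfold t; apply Qpow_ge1).
    nra.
  - intros z j Hz Hj. unfold mod1. unfold rho0.
    assert (Hb : forall a, (forall k, (k <= m)%nat -> d1 (F z k) (F (frac_part a) k) <= 2 / Q) ->
        cc * Q * sumN (fun k => d1 (F z k) (F (frac_part a) k)) (S m) + d1 z (frac_part a) / 2 <= 1).
    { intros a Ha.
      assert (Hsum : sumN (fun k => d1 (F z k) (F (frac_part a) k)) (S m) <= INR (S m) * (2 / Q)).
      { rewrite <- sumN_const. apply sumN_le. intros; apply Ha; lia. }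
      rewrite S_INR in Hsum.
      assert (Hsum2 : cc * Q * sumN (fun k => d1 (F z k) (F (frac_part a) k)) (S m) <= cc * Q * ((INR m + 1) * (2 / Q))).
      { apply Rmult_le_compat_l; nra. }
      replace (cc * Q * ((INR m + 1) * (2 / Q))) with (1/2) in Hsum2 by (unfold cc; field; lra).
      pose proof (d1_half z (frac_part a)). lra. }
    split; apply Hb; intros k Hk; apply (F_gen k j z Hk Hj).
Qed.


Definition Eset z z' := fun r => exists rho, warped_admissible m al t rho /\ r = rho z z'.

Lemma warped_low z z' : T1 z -> T1 z' -> rho0 z z' <= warped_dist m al t z z'.
Proof.
  intros Hz Hz'. unfold warped_dist.
  destruct (lub_props (Eset z z') (t * d1 z z') (rho0 z z')) as [H1 _].
  - exists rho0; split; [apply rho0_adm| reflexivity].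
  - intros r [rho [Hr ->]]. apply (proj1 (proj2 Hr)); auto.
  - apply H1. exists rho0; split; [apply rho0_adm| reflexivity].
Qed.

Lemma warped_up z z' g K : T1 z -> T1 z' -> (forall j, isZ (g j)) -> isZ K ->
  warped_dist m al t z z' <=
  sumN (fun j => Rabs (g j)) m + t * Rabs (z + sumN (fun j => g j * al j) m - z' - K).
Proof.
  intros Hz Hz' Hg HK. unfold warped_dist.
  assert (Ht : 0 <= t) by (unfold t; apply Rlt_le, Qpow_pos).
  destruct (lub_props (Eset z z') (sumN (fun j => Rabs (g j)) m + t * Rabs (z + sumN (fun j => g j * al j) m - z' - K)) (rho0 z z')) as [_ H2].
  - exists rho0; split; [apply rho0_adm| reflexivity].
  - intros r [rho [Hr ->]]. apply (adm_bound m al t rho Hr Ht); auto.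
  - exact H2.
Qed.

Lemma rev_bound z z' : T1 z -> T1 z' -> exists g K, (forall j, isZ (g j)) /\ isZ K /\
  sumN (fun j => Rabs (g j)) m + t * Rabs (z + sumN (fun j => g j * al j) m - z' - K)
   <= (6 * INR m + 1) * Q * sumN (fun k => d1 (F z k) (F z' k)) (S m).
Proof.
  intros Hz Hz'. pose proof D_pos. assert (HQ0 : 0 < Q) by lra.
  set (y := z' - z).
  assert (Hp : forall k, exists p, isZ p /\ d1 (F z k) (F z' k) = Rabs (w k * y - p)).
  { intros k. destruct (d1_attain (w k * z') (w k * z)) as [p [Hp E]]. exists p. split; auto.
    rewrite d1_sym. unfold F. rewrite E. f_equal. unfold y; ring. }
  assert (Hpf : exists p : nat -> R, forall k, isZ (p k) /\ d1 (F z k) (F z' k) = Rabs (w k * y - p k)).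
  { exists (fun k => proj1_sig (constructive_indefinite_description _ (Hp k))). intros k.
    exact (proj2_sig (constructive_indefinite_description _ (Hp k))). }
  destruct Hpf as [p Hpk].
  set (rhoS := sumN (fun k => d1 (F z k) (F z' k)) (S m)).
  set (r := fun k => w k * y - p k).
  assert (Hr : forall k, (k <= m)%nat -> Rabs (r k) <= rhoS).
  { intros k Hk. unfold r. rewrite <- (proj2 (Hpk k)).
    apply (sumN_term (fun k => d1 (F z k) (F z' k))); [intros; apply d1_nonneg_frac| lia]. }
  assert (HrhoS : 0 <= rhoS) by apply sumF_nonneg.
  set (T := fun k => r k - r m * w k / D).
  set (G := fun j => Q * T j - T (S j)).
  assert (HGZ : forall j, (j < m)%nat -> isZ (G j)).
  { intros j Hj. replace (G j) with (- Q * p j + p (S j) + p m * ((Q * w j - w (S j)) / D)).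
    - apply isZ_plus; [apply isZ_plus|].
      + apply isZ_mult; [apply isZ_opp; auto| apply Hpk].
      + apply Hpk.
      + apply isZ_mult; [apply Hpk| apply w_step; auto].
    - unfold G, T, r. rewrite w_m. field. lra. }
  assert (HT : forall k, (k <= m)%nat -> Rabs (T k) <= 2 * rhoS).
  { intros k Hk. unfold T. destruct (w_bounds k Hk) as [[Hw0 HwD] _].
    assert (Rabs (r m * w k / D) <= Rabs (r m)).
    { replace (r m * w k / D) with (r m * (w k / D)) by (field; lra).
      assert (w k / D <= 1). { apply Rle_trans with (D / D). apply div_le_helper; nra. right; field; lra. }
      assert (0 <= w k / D) by (apply Rmult_le_pos; [lra| apply Rlt_le, Rinv_0_lt_compat; lra]).
      rewrite Rabs_mult, (Rabs_right (w k / D)) by lra.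
      pose proof (Rabs_pos (r m)). nra. }
    pose proof (Rabs_triang (r k) (- (r m * w k / D))). rewrite Rabs_Ropp in H1.
    pose proof (Hr k Hk). pose proof (Hr m (le_n m)). unfold Rminus. lra. }
  assert (HG : forall j, (j < m)%nat -> Rabs (G j) <= 3 * Q * rhoS).
  { intros j Hj. unfold G. pose proof (HT j ltac:(lia)). pose proof (HT (S j) ltac:(lia)).
    pose proof (Rabs_triang (Q * T j) (- T (S j))). rewrite Rabs_Ropp, Rabs_mult, (Rabs_right Q) in H2 by lra.
    unfold Rminus. nra. }
  set (g := fun j => if (j <? m)%nat then - G j else 0).
  assert (Hg : forall j, isZ (g j)).
  { intros j. unfold g. destruct (j <? m)%nat eqn:E; [apply isZ_opp, HGZ; apply Nat.ltb_lt; auto| apply isZ_0]. }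
  assert (Htel : forall J, (J <= m)%nat -> sumN (fun j => G j / Q ^ (j+1)) J = T 0%nat - T J / Q ^ J).
  { induction J; intros HJ.
    - simpl. field.
    - simpl sumN. rewrite IHJ by lia. unfold G. pose proof (Qpow_pos J).
      rewrite Nat.add_1_r. simpl. field. lra. }
  assert (HTm : T m = 0) by (unfold T; rewrite w_m; field; lra).
  destruct (w_u 0 Hm) as [X0 [HX0Z HX0]].
  set (K := u * p 0%nat - X0 * p m - sumN (fun j => G j * Nn j) m).
  assert (HKZ : isZ K).
  { unfold K. apply isZ_minus; [apply isZ_minus|].
    - apply isZ_mult; auto; apply Hpk.
    - apply isZ_mult; auto; apply Hpk.
    - apply isZ_sumN. intros j Hj. apply isZ_mult; auto. }
  exists g, K. split; [auto|split; [auto|]].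
  assert (Hsal : sumN (fun j => g j * al j) m =
     (- u) * sumN (fun j => G j / Q ^ (j+1)) m + (-1) * sumN (fun j => G j * Nn j) m
     + (-1) * sumN (fun j => G j * eps j) m).
  { rewrite <- sumN_lin3. apply sumN_ext. intros j Hj. unfold g.
    rewrite (proj2 (Nat.ltb_lt j m) Hj), Hal by auto. field. pose proof (Qpow_pos (j+1)); lra. }
  assert (HuT : u * T 0%nat = - u * p 0%nat - p m / D + X0 * p m).
  { unfold T, r. rewrite w_m.
    replace (u * (w 0%nat * y - p 0%nat - (D * y - p m) * w 0%nat / D))
      with (u * w 0%nat * (y - (D * y - p m) / D) - u * p 0%nat) by (field; lra).
    rewrite HX0. simpl. field. lra. }
  assert (Hid : z + sumN (fun j => g j * al j) m - z' - K = - (r m / D) - sumN (fun j => G j * eps j) m).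
  { rewrite Hsal, Htel, HTm by lia. unfold K.
    replace (- u * (T 0%nat - 0 / Q ^ m)) with (- (u * T 0%nat)) by (field; pose proof (Qpow_pos m); lra).
    rewrite HuT. unfold r. rewrite w_m. unfold y. field. lra. }
  rewrite Hid.
  assert (Hsg : sumN (fun j => Rabs (g j)) m = sumN (fun j => Rabs (G j)) m).
  { apply sumN_ext. intros j Hj. unfold g. rewrite (proj2 (Nat.ltb_lt j m) Hj). apply Rabs_Ropp. }
  rewrite Hsg.
  assert (HsG : sumN (fun j => Rabs (G j)) m <= INR m * (3 * Q * rhoS)).
  { rewrite <- sumN_const. apply sumN_le. intros; apply HG; auto. }
  assert (Habs : Rabs (- (r m / D) - sumN (fun j => G j * eps j) m)
                 <= Rabs (r m) / D + sumN (fun j => Rabs (G j) * eps j) m).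
  { eapply Rle_trans; [apply Rabs_triang|]. rewrite !Rabs_Ropp.
    apply Rplus_le_compat.
    - unfold Rdiv. rewrite Rabs_mult, (Rabs_right (/ D)) by (apply Rle_ge, Rlt_le, Rinv_0_lt_compat; lra). lra.
    - eapply Rle_trans; [apply sumN_abs|]. right. apply sumN_ext. intros j Hj.
      rewrite Rabs_mult, (Rabs_right (eps j)) by (apply Rle_ge, (Heps j Hj)). auto. }
  assert (Hteps : t * sumN (fun j => Rabs (G j) * eps j) m <= sumN (fun j => Rabs (G j)) m).
  { rewrite <- sumN_scal. apply sumN_le. intros j Hj. destruct (Heps j Hj) as [He0 He1].
    assert (t * eps j <= 1).
    { apply Rle_trans with (t * (2 / Q ^ (m+2))). apply Rmult_le_compat_l; auto.
      unfold t; apply Rlt_le, Qpow_pos.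
      unfold t. replace (m+2)%nat with (S (m+1)) by lia. simpl.
      replace (Q ^ (m + 1) * (2 / (Q * Q ^ (m + 1)))) with (2 / Q) by (field; pose proof (Qpow_pos (m+1)); lra).
      apply Rle_trans with (Q / Q); [apply div_le_helper; nra | right; field; lra]. }
    pose proof (Rabs_pos (G j)). nra. }
  assert (Ht0 : 0 <= t) by (unfold t; apply Rlt_le, Qpow_pos).
  assert (Htr : t * Rabs (- (r m / D) - sumN (fun j => G j * eps j) m)
                <= Q * Rabs (r m) + sumN (fun j => Rabs (G j)) m).
  { eapply Rle_trans; [apply Rmult_le_compat_l; [auto| exact Habs]|].
    rewrite Rmult_plus_distr_l. rewrite t_eq at 1.
    replace (Q * D * (Rabs (r m) / D)) with (Q * Rabs (r m)) by (field; lra). lra. }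
  pose proof (Hr m (le_n m)). fold rhoS.
  assert (Q * Rabs (r m) <= Q * rhoS) by (apply Rmult_le_compat_l; lra).
  pose proof (pos_INR m).
  nra.
Qed.


Fixpoint Xr (a : nat -> R) (n : nat) : R :=
  match n with O => 0 | S n' => (a (m - S n')%nat + Xr a n') / Q end.

Lemma Xr_bounds a n : (forall k, 0 <= a k <= Q - 1) -> 0 <= Xr a n < 1.
Proof.
  intros Ha. induction n; simpl; [lra|]. destruct (Ha (m - S n)%nat).
  split.
  - apply Rmult_le_pos; [lra| apply Rlt_le, Rinv_0_lt_compat; lra].
  - apply Rlt_le_trans with (Q / Q); [apply Rmult_lt_compat_r; [apply Rinv_0_lt_compat|]; lra| right; field; lra].
Qed.

Lemma Xr_step a k : (k < m)%nat -> Xr a (m - k) = (a k + Xr a (m - S k)) / Q.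
Proof.
  intros Hk. replace (m - k)%nat with (S (m - S k)) by lia. simpl.
  replace (m - S (m - S k))%nat with k by lia. reflexivity.
Qed.

Lemma Xr_cong a k : (k <= m)%nat -> (forall j, isZ (a j)) -> isZ (Q ^ k * Xr a (m - 0) - Xr a (m - k)).
Proof.
  intros Hk Ha. induction k.
  - replace (Q ^ 0 * Xr a (m - 0) - Xr a (m - 0)) with 0 by (simpl; ring). apply isZ_0.
  - assert (IH := IHk ltac:(lia)).
    replace (Q ^ S k * Xr a (m - 0) - Xr a (m - S k))
      with (Q * (Q ^ k * Xr a (m - 0) - Xr a (m - k)) + a k).
    + apply isZ_plus; auto. apply isZ_mult; auto.
    + rewrite (Xr_step a k) by lia. simpl. field. lra.
Qed.

Lemma density (yv : nat -> R) : Torus m yv ->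
  exists z, T1 z /\ forall k, (k <= m)%nat -> d1 (F z k) (yv k) <= 1 / Q.
Proof.
  intros [Hy1 Hy2]. pose proof D_pos. assert (HQ0 : 0 < Q) by lra.
  set (y' := fun k => yv k - w k * yv m / D).
  set (a := fun k => IZR (Int_part (Q * frac_part (y' k)))).
  assert (Ha1 : forall k, a k <= Q * frac_part (y' k) < a k + 1).
  { intros k. unfold a. destruct (base_Int_part (Q * frac_part (y' k))). lra. }
  assert (HaZ : forall k, isZ (a k)) by (intros; apply isZ_Int).
  assert (Ha : forall k, 0 <= a k <= Q - 1).
  { intros k. destruct (Ha1 k). pose proof (frac_bounds (y' k)).
    split.
    - destruct (isZ_cases (a k) (HaZ k)) as [E|[E|E]]; try lra. nra.
    - assert (a k < Q) by nra.
      destruct (isZ_cases (Q - a k) (isZ_minus _ _ HQZ (HaZ k))) as [E|[E|E]]; lra. }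
  set (X := fun k => Xr a (m - k)).
  assert (HX : forall k, 0 <= X k < 1) by (intros; apply Xr_bounds; auto).
  assert (HXm : X m = 0) by (unfold X; rewrite Nat.sub_diag; reflexivity).
  set (P' := D * X 0%nat).
  assert (HP'Z : isZ P').
  { pose proof (Xr_cong a m (le_n m) HaZ). fold (X 0%nat) in H0. fold (X m) in H0.
    rewrite HXm, Rminus_0_r in H0. exact H0. }
  set (J := IZR (Int_part (- u * P' / D))).
  set (P := D * frac_part (- u * P' / D)).
  assert (HPe : P = - u * P' - D * J) by (unfold P, J, frac_part; field; lra).
  assert (HPZ : isZ P).
  { rewrite HPe. apply isZ_minus; apply isZ_mult; try apply isZ_opp; auto. apply D_isZ. apply isZ_Int. }
  assert (HPb : 0 <= P <= D - 1).
  { pose proof (frac_bounds (- u * P' / D)). assert (0 <= P < D) by (unfold P; nra).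
    split; [lra|]. destruct (isZ_cases (D - P) (isZ_minus _ _ D_isZ HPZ)) as [E|[E|E]]; lra. }
  set (z := (P + yv m) / D).
  assert (Hym := Hy1 m (le_n m)). unfold T1 in Hym.
  exists z. split.
  - unfold T1, z. split.
    + apply Rmult_le_pos; [lra| apply Rlt_le, Rinv_0_lt_compat; lra].
    + apply Rlt_le_trans with (D / D); [apply Rmult_lt_compat_r; [apply Rinv_0_lt_compat|]; lra| right; field; lra].
  - intros k Hk. destruct (Nat.eq_dec k m).
    + subst k. unfold F. rewrite w_m.
      replace (D * z) with (yv m + P) by (unfold z; field; lra).
      rewrite frac_int_shift by auto. rewrite frac_id by auto. rewrite d1_xx.
      apply Rlt_le, Rdiv_lt_0_compat; lra.
    + assert (Hkm : (k < m)%nat) by lia.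
      set (nn := (Q ^ k * X 0%nat - X k) - by_ * Q ^ k * P' + bx * Q ^ k * J - Ik k * P
                 - IZR (Int_part (y' k))).
      assert (HnZ : isZ nn).
      { unfold nn. apply isZ_minus; [apply isZ_minus; [apply isZ_plus; [apply isZ_minus|]|]|].
        - apply (Xr_cong a k Hk HaZ).
        - apply isZ_mult; [apply isZ_mult; [auto| apply isZ_pow; auto]| auto].
        - apply isZ_mult; [apply isZ_mult; [auto| apply isZ_pow; auto]| apply isZ_Int].
        - apply isZ_mult; [apply isZ_Int| auto].
        - apply isZ_Int. }
      assert (Heq : w k * z - yv k - (X k - frac_part (y' k)) = nn + (bx * u + by_ * D - 1) * (Q ^ k * X 0%nat)).
      { unfold z, nn, frac_part, y', P'. rewrite HPe. unfold P'.
        rewrite (w_lt k Hkm). field. lra. }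
      fold D in Hbez. rewrite Hbez, Rminus_diag, Rmult_0_l, Rplus_0_r in Heq.
      unfold F. replace (d1 (frac_part (w k * z)) (yv k)) with (d1 (frac_part (w k * z)) (frac_part (yv k)))
        by (rewrite (frac_id (yv k) (Hy1 k Hk)); auto).
      eapply Rle_trans; [apply (d1_UB _ _ nn HnZ)|].
      replace (w k * z - yv k - nn) with (X k - frac_part (y' k)) by lra.
      assert (HXk : X k = (a k + X (S k)) / Q) by (unfold X; apply Xr_step; auto).
      destruct (Ha1 k). pose proof (HX (S k)).
      assert (Q * X k = a k + X (S k)) by (rewrite HXk; field; lra).
      apply Rabs_le. split.
      * apply Rmult_le_reg_l with Q; [lra|]. field_simplify; nra.
      * apply Rmult_le_reg_l with Q; [lra|]. field_simplify; nra.
Qed.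


Definition fmap z k := if (k <=? m)%nat then F z k else 0.

Lemma td_eq z v : torus_dist m (fmap z) v = sqrt (sumN (fun k => d1 (F z k) (v k) ^ 2) (S m)).
Proof.
  unfold torus_dist. rewrite sum_f_R0_sumN. f_equal. apply sumN_ext. intros k Hk.
  unfold fmap. rewrite (proj2 (Nat.leb_le k m)) by lia. reflexivity.
Qed.

Lemma level_QI : exists f : R -> nat -> R,
  (forall z, T1 z -> Torus m (f z)) /\
  (forall z z', T1 z -> T1 z' ->
     warped_dist m al t z z' / (7 * (INR m + 1)^2) - (INR m + 1) <= Q * torus_dist m (f z) (f z') /\
     Q * torus_dist m (f z) (f z') <= 7 * (INR m + 1)^2 * warped_dist m al t z z' + (INR m + 1)) /\
  (forall yv, Torus m yv -> exists z, T1 z /\ Q * torus_dist m (f z) yv <= INR m + 1).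
Proof.
  assert (HQ0 : 0 < Q) by lra. pose proof (pos_INR m) as Hm0.
  exists fmap. split; [|split].
  - intros z Hz. split.
    + intros k Hk. unfold fmap. rewrite (proj2 (Nat.leb_le k m)) by lia. apply T1_frac.
    + intros k Hk. unfold fmap. destruct (Nat.leb_spec k m); [lia| reflexivity].
  - intros z z' Hz Hz'.
    assert (Hfz' : forall k, (k < S m)%nat -> d1 (F z k) (fmap z' k) = d1 (F z k) (F z' k)).
    { intros k Hk. unfold fmap. rewrite (proj2 (Nat.leb_le k m)) by lia. auto. }
    rewrite td_eq.
    rewrite (sumN_ext _ (fun k => d1 (F z k) (F z' k) ^ 2)) by (intros; rewrite Hfz'; auto).
    set (rhoS := sumN (fun k => d1 (F z k) (F z' k)) (S m)).
    set (sq := sqrt (sumN (fun k => d1 (F z k) (F z' k) ^ 2) (S m))).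
    assert (H1 : sq <= rhoS) by (apply sqrt_sumsq_le; intros; apply d1_nonneg_frac).
    assert (H2 : rhoS <= (INR m + 1) * sq).
    { rewrite <- S_INR. apply sumN_le_sqrt. intros; apply d1_nonneg_frac. }
    assert (Hsq0 : 0 <= sq) by apply sqrt_pos.
    destruct (rev_bound z z' Hz Hz') as [g [K [Hg [HK Hb]]]].
    assert (Hup := warped_up z z' g K Hz Hz' Hg HK).
    assert (Hlow := warped_low z z' Hz Hz').
    fold rhoS in Hb.
    assert (HW : warped_dist m al t z z' <= (6 * INR m + 1) * (INR m + 1) * (Q * sq)).
    { eapply Rle_trans; [exact Hup|]. eapply Rle_trans; [exact Hb|].
      replace ((6 * INR m + 1) * (INR m + 1) * (Q * sq)) with ((6 * INR m + 1) * Q * ((INR m + 1) * sq)) by ring.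
      apply Rmult_le_compat_l; auto. apply Rmult_le_pos; lra. }
    assert (Hr0 : cc * Q * rhoS <= rho0 z z').
    { unfold rho0. fold rhoS. pose proof (d1_nonneg z z' Hz Hz'). lra. }
    assert (Hr0' : 0 <= rho0 z z').
    { destruct (rho0_adm) as [[Hpos _] _]. apply Hpos; auto. }
    assert (Hcc : cc * (4 * (INR m + 1)) = 1) by (unfold cc; field; lra).
    split.
    + assert (HC : 0 < 7 * (INR m + 1) ^ 2) by (simpl; nra).
      assert (warped_dist m al t z z' / (7 * (INR m + 1) ^ 2) <= Q * sq).
      { apply Rle_trans with (((6 * INR m + 1) * (INR m + 1) * (Q * sq)) / (7 * (INR m + 1) ^ 2)).
        - apply Rmult_le_compat_r; [apply Rlt_le, Rinv_0_lt_compat; auto| auto].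
        - assert (0 <= Q * sq) by nra.
          apply Rle_trans with ((Q * sq) / 1); [apply div_le_helper; [auto|lra| simpl; nra] | right; field]. }
      lra.
    + assert (Q * sq <= 4 * (INR m + 1) * rho0 z z').
      { apply Rle_trans with (Q * rhoS); [apply Rmult_le_compat_l; lra|].
        apply Rle_trans with (4 * (INR m + 1) * (cc * Q * rhoS)).
        - right. replace (4 * (INR m + 1) * (cc * Q * rhoS)) with ((cc * (4 * (INR m + 1))) * Q * rhoS) by ring.
          rewrite Hcc. ring.
        - apply Rmult_le_compat_l; lra. }
      assert (4 * (INR m + 1) * rho0 z z' <= 7 * (INR m + 1) ^ 2 * warped_dist m al t z z').
      { apply Rmult_le_compat; try lra. simpl. nra. }
      lra.
  - intros yv Hyv. destruct (density yv Hyv) as [z [Hz Hd]]. exists z. split; auto.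
    rewrite td_eq.
    apply Rle_trans with (Q * sumN (fun k => d1 (F z k) (yv k)) (S m)).
    + apply Rmult_le_compat_l; [lra|]. apply sqrt_sumsq_le. intros k Hk.
      apply d1_nonneg; [apply T1_frac| apply (proj1 Hyv); lia].
    + apply Rle_trans with (Q * (INR (S m) * (1 / Q))).
      * apply Rmult_le_compat_l; [lra|]. rewrite <- sumN_const. apply sumN_le. intros; apply Hd; lia.
      * rewrite S_INR. right. field. lra.
Qed.

End Level.

Fixpoint Qn (m : nat) (n : nat) : nat :=
  match n with O => 2%nat | S n => (Qn m n * (1 + Qn m n ^ (m+3)))%nat end.

Section Tower.
Variable m : nat.
Hypothesis Hm : (0 < m)%nat.

Definition QR n := INR (Qn m n).
Definition RR n := 1 + QR n ^ (m+3).

Lemma QR_S n : QR (S n) = QR n * RR n.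
Proof. unfold QR, RR. change (Qn m (S n)) with (Qn m n * (1 + Qn m n ^ (m+3)))%nat.
  rewrite mult_INR, plus_INR, pow_INR. reflexivity. Qed.

Lemma QR_ge2 n : 2 <= QR n.
Proof.
  induction n.
  - unfold QR; simpl. lra.
  - rewrite QR_S. unfold RR. assert (1 <= QR n ^ (m+3)) by (apply pow_ge1; lra). nra.
Qed.

Lemma QR_isZ n : isZ (QR n). Proof. apply isZ_INR. Qed.

Lemma RR_ge n : QR n ^ (m+3) <= RR n /\ 2 <= RR n.
Proof. unfold RR. pose proof (QR_ge2 n). assert (1 <= QR n ^ (m+3)) by (apply pow_ge1; lra). lra. Qed.

Lemma QR_S_ge n : 2 * QR n <= QR (S n).
Proof. rewrite QR_S. pose proof (QR_ge2 n). destruct (RR_ge n). nra. Qed.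

Definition sd (e : nat -> bool) n : nat := if e n then 2%nat else 1%nat.

Definition aa (e : nat -> bool) (j : nat) (n : nat) : R :=
  match n with O => 1 / QR 0 ^ (j+1) | S n' => QR n' ^ sd e n' / QR (S n') ^ (j+1) end.

Definition psum e j N := sumN (aa e j) N.

Definition BB n := 1 / QR n ^ (m+2).

Lemma aa_nonneg e j n : 0 <= aa e j n.
Proof.
  destruct n; simpl.
  - pose proof (QR_ge2 0). apply Rlt_le, Rdiv_lt_0_compat; [lra| apply pow_lt; lra].
  - pose proof (QR_ge2 n). pose proof (QR_ge2 (S n)).
    apply Rlt_le, Rdiv_lt_0_compat; apply pow_lt; lra.
Qed.

Lemma aa_bound e j n : aa e j (S n) <= BB n.
Proof.
  simpl. unfold BB. pose proof (QR_ge2 n) as H1. pose proof (QR_ge2 (S n)) as H2.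
  destruct (RR_ge n) as [HR1 HR2].
  assert (Hs : QR n ^ sd e n <= QR n ^ 2).
  { unfold sd; destruct (e n); simpl; nra. }
  assert (Hp : QR (S n) <= QR (S n) ^ (j+1)) by (apply pow_ge_base; lra || lia).
  assert (Hpos : 0 < QR n ^ (m+2)) by (apply pow_lt; lra).
  assert (HQ3 : QR n ^ (m+3) = QR n * QR n ^ (m+2)) by (replace (m+3)%nat with (S (m+2)) by lia; reflexivity).
  apply div_le_helper; [apply pow_lt; lra| auto|].
  apply Rle_trans with (QR n ^ 2 * QR n ^ (m+2)).
  - apply Rmult_le_compat_r; lra.
  - assert (QR n * QR n ^ (m+3) <= QR n * RR n) by (apply Rmult_le_compat_l; lra).
    rewrite HQ3, <- QR_S in H. rewrite Rmult_1_l.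
    replace (QR n ^ 2 * QR n ^ (m + 2)) with (QR n * (QR n * QR n ^ (m + 2))) by (simpl; ring).
    lra.
Qed.

Lemma BB_half n : 2 * BB (S n) <= BB n.
Proof.
  unfold BB. pose proof (QR_S_ge n). pose proof (QR_ge2 n).
  assert (H3 : (2 * QR n) ^ (m+2) <= QR (S n) ^ (m+2)) by (apply pow_incr; lra).
  rewrite Rpow_mult_distr in H3.
  assert (2 <= 2 ^ (m+2)) by (apply pow_ge_base; lra || lia).
  assert (Hp : 0 < QR n ^ (m+2)) by (apply pow_lt; lra).
  replace (2 * (1 / QR (S n) ^ (m+2))) with (2 / QR (S n) ^ (m+2)) by (field; apply pow_nonzero; lra).
  apply div_le_helper; [apply pow_lt; lra| auto| nra].
Qed.

Lemma BB_pos n : 0 < BB n.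
Proof. unfold BB. pose proof (QR_ge2 n). apply Rdiv_lt_0_compat; [lra| apply pow_lt; lra]. Qed.

Lemma psum_mono e j N M : (N <= M)%nat -> psum e j N <= psum e j M.
Proof.
  intros H. induction H as [|M HM IH]; [lra|]. unfold psum in *. simpl. pose proof (aa_nonneg e j M). lra.
Qed.

Lemma psum_tail e j n N : psum e j (S n + N) + 2 * BB (n + N) <= psum e j (S n) + 2 * BB n.
Proof.
  induction N.
  - rewrite !Nat.add_0_r. lra.
  - replace (S n + S N)%nat with (S (S n + N)) by lia.
    assert (E : psum e j (S (S n + N)) = psum e j (S n + N) + aa e j (S n + N)) by reflexivity.
    rewrite E. replace (n + S N)%nat with (S (n + N)) by lia.
    pose proof (aa_bound e j (n + N)). replace (S (n + N)) with (S n + N)%nat in H by lia.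
    pose proof (BB_half (n + N)). lra.
Qed.

Definition alpha (e : nat -> bool) (j : nat) : R :=
  if (j <? m)%nat then real (Lub_Rbar (fun x => exists N, x = psum e j N)) else 0.

Lemma alpha_bounds e j n : (j < m)%nat ->
  psum e j (S n) <= alpha e j <= psum e j (S n) + 2 * BB n.
Proof.
  intros Hj. unfold alpha. rewrite (proj2 (Nat.ltb_lt j m) Hj).
  destruct (lub_props (fun x => exists N, x = psum e j N) (psum e j (S n) + 2 * BB n) (psum e j (S n)))
    as [H1 H2].
  - exists (S n); auto.
  - intros r [N ->]. destruct (le_lt_dec N (S n)).
    + pose proof (psum_mono e j N (S n) l). pose proof (BB_pos n). lra.
    + replace N with (S n + (N - S n))%nat by lia. pose proof (psum_tail e j n (N - S n)).
      pose proof (BB_pos (n + (N - S n))). lra.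
  - split; auto. apply H1. exists (S n); auto.
Qed.

Lemma tuple_alpha e : tuple_in_01 m (alpha e).
Proof.
  split.
  - intros j Hj. destruct (alpha_bounds e j 0 Hj) as [H1 H2].
    assert (E0 : psum e j 1 = 1 / QR 0 ^ (j+1)) by (unfold psum; simpl; ring).
    assert (HQ0 : QR 0 = 2) by (unfold QR; simpl; ring).
    unfold BB in H2. rewrite E0, HQ0 in *.
    assert (Hp : 0 < 1 / 2 ^ (j+1)) by (apply Rdiv_lt_0_compat; [lra| apply pow_lt; lra]).
    assert (Hp1 : 1 / 2 ^ (j+1) <= 1/2).
    { apply div_le_helper; [apply pow_lt; lra| lra|]. rewrite Nat.add_1_r. simpl.
      assert (1 <= 2 ^ j) by (apply pow_ge1; lra). lra. }
    assert (Hp2 : 2 * (1 / 2 ^ (m+2)) <= 1/4).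
    { replace (2 * (1 / 2 ^ (m+2))) with (2 / 2 ^ (m+2)) by (field; apply pow_nonzero; lra).
      apply div_le_helper; [apply pow_lt; lra| lra|].
      replace (m+2)%nat with (S (S m)) by lia. simpl.
      assert (2 <= 2 ^ m) by (apply pow_ge_base; lra || lia). lra. }
    split; lra.
  - intros j Hj. unfold alpha. destruct (Nat.ltb_spec j m); [lia| auto].
Qed.

Fixpoint uu (e : nat -> bool) (n : nat) : R :=
  match n with O => 1 | S n' => uu e n' * RR n' ^ m + QR n' ^ sd e n' end.

Lemma uu_isZ e n : isZ (uu e n).
Proof.
  induction n; simpl; [apply isZ_1|]. apply isZ_plus; apply isZ_mult || apply isZ_pow; auto.
  - apply isZ_pow. unfold RR. apply isZ_plus; [apply isZ_1| apply isZ_pow, QR_isZ].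
  - apply QR_isZ.
Qed.

Lemma pow_1plus x e : isZ x -> exists Y, isZ Y /\ (1 + x) ^ e - 1 = x * Y.
Proof.
  intros Hx. induction e.
  - exists 0. split; [apply isZ_0| simpl; ring].
  - destruct IHe as [Y [HY E]]. exists ((1 + x) * Y + 1). split.
    + apply isZ_plus; [apply isZ_mult; [apply isZ_plus; [apply isZ_1|auto]|auto]| apply isZ_1].
    + simpl. replace ((1 + x) * (1 + x) ^ e - 1) with ((1 + x) * ((1 + x) ^ e - 1) + x) by ring.
      rewrite E. ring.
Qed.

Lemma RR_pow_cong n k : exists Y, isZ Y /\ RR n ^ k = 1 + QR n ^ (m+3) * Y.
Proof.
  destruct (pow_1plus (QR n ^ (m+3)) k (isZ_pow _ _ (QR_isZ n))) as [Y [HY E]].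
  exists Y. split; auto. unfold RR. lra.
Qed.

Lemma psum_level e j n : (j < m)%nat -> isZ (psum e j (S n) - uu e n / QR n ^ (j+1)).
Proof.
  intros Hj. induction n.
  - unfold psum. simpl. replace (0 + 1 / QR 0 ^ (j+1) - 1 / QR 0 ^ (j+1)) with 0 by ring. apply isZ_0.
  - pose proof (QR_ge2 n) as HQ. destruct (RR_ge n) as [_ HR].
    destruct (RR_pow_cong n (m - (j+1))) as [Y [HY EY]].
    assert (Hsplit : RR n ^ m = RR n ^ (j+1) * RR n ^ (m - (j+1))) by (rewrite <- pow_add; f_equal; lia).
    assert (HQsplit : QR n ^ (m+3) = QR n ^ (j+1) * QR n ^ (m + 3 - (j+1))) by (rewrite <- pow_add; f_equal; lia).
    replace (psum e j (S (S n)) - uu e (S n) / QR (S n) ^ (j + 1))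
      with ((psum e j (S n) - uu e n / QR n ^ (j+1)) + (- uu e n * Y * QR n ^ (m + 3 - (j+1)))).
    + apply isZ_plus; auto. apply isZ_mult; [apply isZ_mult; [apply isZ_opp, uu_isZ| auto]| apply isZ_pow, QR_isZ].
    + unfold psum. simpl sumN. simpl aa. simpl uu. rewrite QR_S.
      rewrite Rpow_mult_distr. rewrite Hsplit, EY, HQsplit.
      field. split; apply pow_nonzero; lra.
Qed.

Definition coprime (a b : R) := exists p q, isZ p /\ isZ q /\ p * a + q * b = 1.

Lemma div_lt_helper a b c d : 0 < b -> 0 < d -> a * d < c * b -> a / b < c / d.
Proof.
  intros Hb Hd H. replace (a / b) with ((a * d) * / (b * d)) by (field; lra).
  replace (c / d) with ((c * b) * / (b * d)) by (field; lra).
  apply Rmult_lt_compat_r; auto. apply Rinv_0_lt_compat, Rmult_lt_0_compat; auto.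
Qed.

Lemma pow_S_pred x k : (1 <= k)%nat -> x ^ k = x * x ^ (k-1).
Proof. intros H; destruct k; [lia|]. simpl. rewrite Nat.sub_0_r. reflexivity. Qed.

Lemma coprime_mult a b c : isZ a -> isZ b -> isZ c -> coprime a b -> coprime a c -> coprime a (b * c).
Proof.
  intros Ha Hb Hc [p1 [q1 [Hp1 [Hq1 E1]]]] [p2 [q2 [Hp2 [Hq2 E2]]]].
  exists (p1 * p2 * a + p1 * q2 * c + q1 * b * p2), (q1 * q2).
  split; [|split].
  - apply isZ_plus; [apply isZ_plus|]; repeat apply isZ_mult; auto.
  - apply isZ_mult; auto.
  - replace 1 with ((p1 * a + q1 * b) * (p2 * a + q2 * c)) by (rewrite E1, E2; ring). ring.
Qed.

Lemma coprime_pow a b k : isZ a -> isZ b -> coprime a b -> coprime a (b ^ k).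
Proof.
  intros Ha Hb H. induction k.
  - exists 0, 1. split; [apply isZ_0|split; [apply isZ_1| simpl; ring]].
  - simpl. rewrite Rmult_comm. apply coprime_mult; auto. apply isZ_pow; auto.
Qed.

Lemma RR_isZ n : isZ (RR n).
Proof. unfold RR. apply isZ_plus; [apply isZ_1| apply isZ_pow, QR_isZ]. Qed.

Lemma uu_coprime e n : coprime (uu e n) (QR n).
Proof.
  induction n.
  - exists 1, 0. split; [apply isZ_1| split; [apply isZ_0| simpl; ring]].
  - rewrite QR_S. pose proof (QR_isZ n) as HQZ. pose proof (RR_isZ n) as HRZ.
    pose proof (uu_isZ e n) as HuZ.
    assert (Hs : (1 <= sd e n <= 2)%nat) by (unfold sd; destruct (e n); lia).
    apply coprime_mult; [apply uu_isZ| auto| auto| |].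
    + destruct IHn as [p [q [Hp [Hq E]]]].
      destruct (RR_pow_cong n m) as [Y [HY EY]].
      set (Z1 := uu e n * QR n ^ (m+2) * Y + QR n ^ (sd e n - 1)).
      assert (HZ1 : isZ Z1) by (unfold Z1; apply isZ_plus; repeat apply isZ_mult; auto; apply isZ_pow; auto).
      assert (Hu' : uu e (S n) = uu e n + QR n * Z1).
      { simpl uu. rewrite EY. unfold Z1.
        replace (QR n ^ (m+3)) with (QR n * QR n ^ (m+2)) by (replace (m+3)%nat with (S (m+2)) by lia; reflexivity).
        replace (QR n ^ sd e n) with (QR n * QR n ^ (sd e n - 1))
          by (symmetry; apply pow_S_pred; lia).
        ring. }
      exists p, (q - p * Z1). split; auto. split; [apply isZ_minus; auto; apply isZ_mult; auto|].
      rewrite Hu'. replace 1 with (p * uu e n + q * QR n) by auto. ring.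
    + set (p' := - QR n ^ (m + 3 - sd e n)).
      assert (Hp' : isZ p') by (unfold p'; apply isZ_opp, isZ_pow; auto).
      assert (Hc : p' * QR n ^ sd e n + RR n = 1).
      { unfold p', RR. replace (QR n ^ (m+3)) with (QR n ^ (m + 3 - sd e n) * QR n ^ sd e n)
          by (rewrite <- pow_add; f_equal; lia). ring. }
      exists p', (1 - p' * uu e n * RR n ^ (m - 1)). split; auto.
      split; [apply isZ_minus; [apply isZ_1| repeat apply isZ_mult; auto; apply isZ_pow; auto]|].
      simpl uu. replace (RR n ^ m) with (RR n * RR n ^ (m-1)) by (symmetry; apply pow_S_pred; lia).
      rewrite <- Hc at 2. ring.
Qed.

Lemma psum_agree e e' j N : (forall k, (S k < N)%nat -> e k = e' k) -> psum e j N = psum e' j N.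
Proof.
  induction N; intros H; [reflexivity|]. unfold psum in *. simpl.
  rewrite IHN by (intros; apply H; lia). f_equal.
  destruct N; [reflexivity|]. simpl. unfold sd. rewrite H by lia. reflexivity.
Qed.

Lemma least_diff (e e' : nat -> bool) : (exists k, e k <> e' k) ->
  exists k, e k <> e' k /\ forall k', (k' < k)%nat -> e k' = e' k'.
Proof.
  intros [k Hk].
  assert (Hgen : forall N, (forall k', (k' < N)%nat -> e k' = e' k') \/
                     exists k, e k <> e' k /\ forall k', (k' < k)%nat -> e k' = e' k').
  { induction N.
    - left; intros; lia.
    - destruct IHN as [H|H]; [|right; auto].
      destruct (Bool.bool_dec (e N) (e' N)).
      + left. intros k' Hk'. destruct (Nat.eq_dec k' N); [subst; auto| apply H; lia].
      + right. exists N. split; auto. }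
  destruct (Hgen (S k)) as [H|H]; auto. exfalso. apply Hk, H. lia.
Qed.

Lemma alpha_inj e e' : alpha e = alpha e' -> forall k, e k = e' k.
Proof.
  intros Heq k. destruct (Bool.bool_dec (e k) (e' k)) as [|Hne]; auto. exfalso.
  destruct (least_diff e e' (ex_intro _ k Hne)) as [k0 [Hk0 Hlt]].
  assert (Hagree : psum e 0 (S k0) = psum e' 0 (S k0)) by (apply psum_agree; intros; apply Hlt; lia).
  destruct (alpha_bounds e 0 (S k0) Hm) as [A1 A2].
  destruct (alpha_bounds e' 0 (S k0) Hm) as [B1 B2].
  rewrite Heq in A1, A2.
  assert (Ee : psum e 0 (S (S k0)) = psum e 0 (S k0) + QR k0 ^ sd e k0 / QR (S k0) ^ 1) by reflexivity.
  assert (Ee' : psum e' 0 (S (S k0)) = psum e' 0 (S k0) + QR k0 ^ sd e' k0 / QR (S k0) ^ 1) by reflexivity.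
  pose proof (QR_ge2 k0) as HQ. pose proof (QR_ge2 (S k0)) as HQS.
  assert (Hgap : QR k0 / QR (S k0) > 2 * BB (S k0)).
  { unfold BB. replace (2 * (1 / QR (S k0) ^ (m+2))) with (2 / QR (S k0) ^ (m+2)) by (field; apply pow_nonzero; lra).
    apply Rlt_gt. apply div_lt_helper; [apply pow_lt; lra| lra|].
    assert (Hs : QR (S k0) ^ (m+2) = QR (S k0) * QR (S k0) ^ (m+1)) by (replace (m+2)%nat with (S (m+1)) by lia; reflexivity).
    assert (QR (S k0) <= QR (S k0) ^ (m+1)) by (apply pow_ge_base; lra || lia).
    rewrite Hs. assert (H2 : 2 * QR (S k0) <= QR (S k0) * QR (S k0) ^ (m+1)) by nra.
    assert (H3 : 2 * (QR (S k0) * QR (S k0) ^ (m+1)) <= QR k0 * (QR (S k0) * QR (S k0) ^ (m+1))) by nra.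
    lra. }
  assert (Hdiff : QR k0 ^ 2 / QR (S k0) ^ 1 - QR k0 ^ 1 / QR (S k0) ^ 1 >= QR k0 / QR (S k0)).
  { rewrite !pow_1. unfold Rdiv. assert (0 < / QR (S k0)) by (apply Rinv_0_lt_compat; lra). simpl. nra. }
  unfold sd in Ee, Ee'. destruct (e k0), (e' k0); try congruence; lra.
Qed.

Definition Sset := fun al : nat -> R => exists e, al = alpha e.

Lemma Sset_uncountable : uncountable Sset.
Proof.
  intros [g Hg].
  assert (Hh : forall n, exists e : nat -> bool, (exists e0, alpha e0 = g n) -> alpha e = g n).
  { intros n. destruct (excluded_middle_informative (exists e0, alpha e0 = g n)) as [[e0 He0]|H].
    - exists e0. auto.
    - exists (fun _ => true). intros H'. contradiction. }
  set (h := fun n => proj1_sig (constructive_indefinite_description _ (Hh n))).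
  assert (Hhp : forall n, (exists e0, alpha e0 = g n) -> alpha (h n) = g n).
  { intros n. exact (proj2_sig (constructive_indefinite_description _ (Hh n))). }
  set (d := fun n => negb (h n n)).
  destruct (Hg (alpha d) (ex_intro _ d eq_refl)) as [n Hn].
  assert (E := Hhp n (ex_intro _ d (eq_sym Hn))).
  rewrite Hn in E. assert (E2 := alpha_inj _ _ E n). unfold d in E2.
  destruct (h n n); discriminate.
Qed.

End Tower.

Lemma Qn_ge2 m n : (2 <= Qn m n)%nat.
Proof. induction n; simpl; [lia|]. assert (1 <= Qn m n ^ (m+3))%nat by (apply Nat.neq_0_lt_0, Nat.pow_nonzero; lia). nia. Qed.

Lemma Qn_S m n : (Qn m n < Qn m (S n))%nat.
Proof. simpl. pose proof (Qn_ge2 m n). assert (1 <= Qn m n ^ (m+3))%nat by (apply Nat.neq_0_lt_0, Nat.pow_nonzero; lia). nia. Qed.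

Lemma Qn_incr m : strictly_increasing (Qn m).
Proof.
  intros i j H. induction H.
  - apply Qn_S.
  - eapply Nat.lt_trans; [exact IHle| apply Qn_S].
Qed.

Theorem propositionA3 (m : nat) (hm : (0 < m)%nat) :
  exists (t tau : nat -> nat),
    strictly_increasing t /\ strictly_increasing tau /\
    (forall i, (0 < t i)%nat) /\
    exists S : (nat -> R) -> Prop,
      uncountable S /\
      (forall alpha, S alpha -> tuple_in_01 m alpha) /\
      (forall alpha, S alpha ->
         QI_seq (fun _ z => T1 z)
                (fun i => warped_dist m alpha (INR (t i)))
                (fun _ x => Torus m x)
                (fun i x y => INR (tau i) * torus_dist m x y)).
Proof.
  exists (fun i => (Qn m i ^ (m+1))%nat), (Qn m).
  split; [|split; [|split]].
  - intros i j H. apply Nat.pow_lt_mono_l; [lia| apply Qn_incr; auto].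
  - apply Qn_incr.
  - intros i. apply Nat.neq_0_lt_0, Nat.pow_nonzero. pose proof (Qn_ge2 m i). lia.
  - exists (Sset m). split; [apply Sset_uncountable; auto|split].
    + intros al [e ->]. apply tuple_alpha; auto.
    + intros al [e ->]. unfold QI_seq.
      pose proof (pos_INR m) as Hm0.
      exists (7 * (INR m + 1) ^ 2), (INR m + 1).
      split; [simpl; nra|]. split; [lra|].
      assert (HL : forall i, exists f : R -> nat -> R,
        (forall z, T1 z -> Torus m (f z)) /\
        (forall z z', T1 z -> T1 z' ->
           warped_dist m (alpha m e) (INR (Qn m i ^ (m+1))) z z' / (7 * (INR m + 1) ^ 2) - (INR m + 1)
             <= INR (Qn m i) * torus_dist m (f z) (f z') /\
           INR (Qn m i) * torus_dist m (f z) (f z')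
             <= 7 * (INR m + 1) ^ 2 * warped_dist m (alpha m e) (INR (Qn m i ^ (m+1))) z z' + (INR m + 1)) /\
        (forall y, Torus m y -> exists z, T1 z /\ INR (Qn m i) * torus_dist m (f z) y <= INR m + 1)).
      { intros i. rewrite pow_INR. fold (QR m i).
        destruct (coprime_pow (uu m e i) (QR m i) m (uu_isZ m e i) (QR_isZ m i) (uu_coprime m hm e i))
          as [bx [by_ [Hbx [Hby Hbez]]]].
        apply (level_QI m (QR m i) (uu m e i) bx by_ (alpha m e)
                 (fun j => psum m e j (S i) - uu m e i / QR m i ^ (j+1))
                 (fun j => alpha m e j - psum m e j (S i))); auto.
        - apply QR_ge2.
        - apply QR_isZ.
        - apply uu_isZ.
        - intros j Hj. ring.
        - intros j Hj. apply psum_level; auto.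
        - intros j Hj. destruct (alpha_bounds m hm e j i Hj). unfold BB in *. split; [lra|].
          replace (2 / QR m i ^ (m+2)) with (2 * (1 / QR m i ^ (m+2))) by (field; apply pow_nonzero; pose proof (QR_ge2 m i); lra).
          lra. }
      exists (fun i => proj1_sig (constructive_indefinite_description _ (HL i))).
      intros i. destruct (proj2_sig (constructive_indefinite_description _ (HL i))) as [H1 [H2 H3]].
      split; [exact H1| split; [exact H2| exact H3]].
Qed.
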